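(* Let $\alpha>0$ and for $w\in\mathbb{D}$ and $i\in\mathbb{N}$ set $f_w^{[i]}(z)=\frac{z^i}{(1-\overline{w}z)^{\alpha+i}}$, $z\in\mathbb{D}$. Then for each $i\ge1$, $\|f_w^{[i]}\|_{\mathcal{B}^{\alpha}}\simeq\frac{1}{(1-|w|^2)^{i+1}}$ for all $w\in\mathbb{D}$, and $\|f_w^{[0]}\|_{\mathcal{B}^{\alpha}}\simeq\frac{1}{1-|w|^2}$ for all $w\in\mathbb{D}$ with $|w|>\frac12$.
   Context: $\mathbb{D}$ is the open unit disc in $\mathbb{C}$. For $\alpha>0$, $\mathcal{B}^{\alpha}$ is the space of analytic $f$ on $\mathbb{D}$ with $\|f\|_{\mathcal{B}^{\alpha}}=|f(0)|+\sup_{z\in\mathbb{D}}(1-|z|^2)^{\alpha}|f'(z)|<\infty$. $A\simeq B$ means there are constants $C_1,C_2>0$ independent of $w$ (possibly depending on $\alpha$ and $i$) with $C_1B\le A\le C_2B$. *)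

(* Defs.v *)
From Stdlib Require Import Reals.
From Coquelicot Require Import Coquelicot.
Open Scope R_scope.

(* Principal argument, valid (and only used) on the right half-plane Re u > 0,
   where it equals atan (Im u / Re u) in (-pi/2, pi/2). *)
Definition Arg_rhp (u : C) : R := atan (Im u / Re u).

(* Principal branch of the complex power u^s for real s, on Re u > 0:
   u^s = exp (s * Log u),  Log u = ln |u| + i Arg u. *)
Definition cpowR (u : C) (s : R) : C :=
  let m := exp (s * ln (Cmod u)) in
  let t := s * Arg_rhp u in
  (m * cos t, m * sin t).

Fixpoint cpown (z : C) (n : nat) : C :=
  match n with O => RtoC 1 | S k => Cmult z (cpown z k) end.

Definition inD (z : C) : Prop := Cmod z < 1.

Definition analytic_on_D (f : C -> C) : Prop :=
  forall z : C, inD z -> exists l : C, @is_derive C_AbsRing C_NormedModule f z l.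

(* ||f||_{B^alpha} = |f(0)| + sup_{z in D} (1-|z|^2)^alpha |f'(z)|, in Rbar
   (value +oo when the sup is infinite). *)
Definition Bnorm (alpha : R) (f : C -> C) : Rbar :=
  Rbar_plus (Finite (Cmod (f (RtoC 0))))
    (Lub_Rbar (fun r => exists z : C, inD z /\
        exists l : C, @is_derive C_AbsRing C_NormedModule f z l /\
        r = Rpower (1 - Cmod z ^ 2) alpha * Cmod l)).

Definition fw (alpha : R) (i : nat) (w : C) (z : C) : C :=
  Cdiv (cpown z i) (cpowR (Cminus (RtoC 1) (Cmult (Cconj w) z)) (alpha + INR i)).

(* Main.v *)
Require Import Defs.
From Stdlib Require Import Reals Lra.
From Coquelicot Require Import Coquelicot.
Open Scope R_scope.

Lemma CR (f : C -> C) (x y a b : R) :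
  differentiable_pt_lim (fun u v => fst (f (u,v))) x y a (-b) ->
  differentiable_pt_lim (fun u v => snd (f (u,v))) x y b a ->
  @is_derive C_AbsRing C_NormedModule f (x,y) (a,b).
Proof.
  intros H1 H2. split.
  - apply is_linear_scal_l.
  - intros z Hz. apply (@is_filter_lim_locally_unique C_AbsRing (AbsRing_NormedModule C_AbsRing)) in Hz. subst z.
    intros eps.
    assert (He : 0 < eps / 2) by (destruct eps; simpl; lra).
    destruct (H1 (mkposreal _ He)) as [d1 Hd1].
    destruct (H2 (mkposreal _ He)) as [d2 Hd2].
    exists (mkposreal _ (Rmin_pos _ _ (cond_pos d1) (cond_pos d2))).
    intros [u v] Hb. simpl in Hb. unfold ball in Hb. simpl in Hb. unfold AbsRing_ball in Hb.
    simpl in Hb.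
    change (Cmod (minus (u,v) (x,y)) < Rmin d1 d2) in Hb.
    assert (Hm : Rmax (Rabs (u - x)) (Rabs (v - y)) <= Cmod (minus (u,v) (x,y))).
    { pose proof (Rmax_Cmod (minus (u,v) (x,y))) as H. exact H. }
    assert (Hu : Rabs (u - x) < Rmin d1 d2) by (eapply Rle_lt_trans; [|exact Hb]; eapply Rle_trans; [apply Rmax_l|exact Hm]).
    assert (Hv : Rabs (v - y) < Rmin d1 d2) by (eapply Rle_lt_trans; [|exact Hb]; eapply Rle_trans; [apply Rmax_r|exact Hm]).
    specialize (Hd1 u v (Rlt_le_trans _ _ _ Hu (Rmin_l _ _)) (Rlt_le_trans _ _ _ Hv (Rmin_l _ _))).
    specialize (Hd2 u v (Rlt_le_trans _ _ _ Hu (Rmin_r _ _)) (Rlt_le_trans _ _ _ Hv (Rmin_r _ _))).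
    simpl in Hd1, Hd2.
    change (Cmod (Cminus (Cminus (f (u, v)) (f (x, y))) (Cmult (Cminus (u, v) (x, y)) (a, b))) <= eps * Cmod (Cminus (u, v) (x, y))).
    change (Cmod (Cminus (u, v) (x, y)) < Rmin d1 d2) in Hb. change (Rmax (Rabs (u - x)) (Rabs (v - y)) <= Cmod (Cminus (u, v) (x, y))) in Hm.
    eapply Rle_trans. apply Cmod_2Rmax.
    destruct (f (u,v)) as [p q]. destruct (f (x,y)) as [p0 q0]. simpl in Hd1, Hd2.
    assert (Hs : sqrt 2 < 2).
    { rewrite <- (sqrt_square 2) at 2 by lra. apply sqrt_lt_1_alt; lra. }
    assert (E1 : fst (Cminus (Cminus (p, q) (p0, q0)) (Cmult (Cminus (u, v) (x, y)) (a, b))) = p - p0 - (a * (u - x) + - b * (v - y))).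
    { simpl. ring. }
    assert (E2 : snd (Cminus (Cminus (p, q) (p0, q0)) (Cmult (Cminus (u, v) (x, y)) (a, b))) = q - q0 - (b * (u - x) + a * (v - y))).
    { simpl. ring. }
    rewrite E1, E2.
    set (M := Rmax (Rabs (u - x)) (Rabs (v - y))) in *.
    assert (HM0 : 0 <= M) by (unfold M; eapply Rle_trans; [apply Rabs_pos|apply Rmax_l]).
    assert (Hmax : Rmax (Rabs (p - p0 - (a * (u - x) + - b * (v - y)))) (Rabs (q - q0 - (b * (u - x) + a * (v - y)))) <= eps / 2 * M).
    { apply Rmax_lub; assumption. }
    assert (Hsq : 0 <= sqrt 2) by apply sqrt_pos.
    destruct eps as [e ep]. simpl in *.
    apply Rle_trans with (sqrt 2 * (e / 2 * M)).
    + apply Rmult_le_compat_l; auto.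
    + apply Rle_trans with (e * M). assert (0 <= e * M) by (apply Rmult_le_pos; lra). nra. apply Rmult_le_compat_l; lra.
Qed.

Lemma dpl_eq f x y lx ly lx' ly' :
  differentiable_pt_lim f x y lx ly -> lx = lx' -> ly = ly' -> differentiable_pt_lim f x y lx' ly'.
Proof. intros H -> ->; exact H. Qed.

Lemma dpl_fext f g x y lx ly :
  (forall u v, f u v = g u v) -> differentiable_pt_lim f x y lx ly -> differentiable_pt_lim g x y lx ly.
Proof. intros H. apply differentiable_pt_lim_ext. apply locally_2d_forall. exact H. Qed.

Lemma dpl_Rmult x y : differentiable_pt_lim (fun a b => a * b) x y y x.
Proof.
  intros eps. exists eps. intros u v Hu Hv.
  replace (u * v - x * y - (y * (u - x) + x * (v - y))) with ((u - x) * (v - y)) by ring.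
  rewrite Rabs_mult.
  apply Rle_trans with (Rmax (Rabs (u - x)) (Rabs (v - y)) * Rmax (Rabs (u - x)) (Rabs (v - y))).
  - apply Rmult_le_compat; try apply Rabs_pos. apply Rmax_l. apply Rmax_r.
  - apply Rmult_le_compat_r. eapply Rle_trans; [apply Rabs_pos|apply Rmax_l].
    apply Rlt_le. apply Rmax_lub_lt; assumption.
Qed.

Lemma dpl_Rplus x y : differentiable_pt_lim (fun a b => a + b) x y 1 1.
Proof.
  intros eps. exists eps. intros u v Hu Hv.
  replace (u + v - (x + y) - (1 * (u - x) + 1 * (v - y))) with 0 by ring.
  rewrite Rabs_R0. apply Rmult_le_pos. destruct eps; simpl; lra.
  eapply Rle_trans; [apply Rabs_pos|apply Rmax_l].
Qed.

Lemma dpl_fst x y : differentiable_pt_lim (fun u v => u) x y 1 0.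
Proof. apply differentiable_pt_lim_proj1_0. apply derivable_pt_lim_id. Qed.

Lemma dpl_snd x y : differentiable_pt_lim (fun u v => v) x y 0 1.
Proof.
  intros eps. exists eps. intros u v Hu Hv.
  replace (v - y - (0 * (u - x) + 1 * (v - y))) with 0 by ring.
  rewrite Rabs_R0. apply Rmult_le_pos. destruct eps; simpl; lra.
  eapply Rle_trans; [apply Rabs_pos|apply Rmax_l].
Qed.

Lemma dpl_mult f g x y fx fy gx gy :
  differentiable_pt_lim f x y fx fy -> differentiable_pt_lim g x y gx gy ->
  differentiable_pt_lim (fun u v => f u v * g u v) x y
    (fx * g x y + f x y * gx) (fy * g x y + f x y * gy).
Proof.
  intros Hf Hg.
  eapply dpl_eq. apply (differentiable_pt_lim_comp (fun a b => a * b) f g x y).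
  apply dpl_Rmult. exact Hf. exact Hg. ring. ring.
Qed.

Lemma dpl_plus f g x y fx fy gx gy :
  differentiable_pt_lim f x y fx fy -> differentiable_pt_lim g x y gx gy ->
  differentiable_pt_lim (fun u v => f u v + g u v) x y (fx + gx) (fy + gy).
Proof.
  intros Hf Hg.
  eapply dpl_eq. apply (differentiable_pt_lim_comp (fun a b => a + b) f g x y).
  apply dpl_Rplus. exact Hf. exact Hg. ring. ring.
Qed.

Lemma dpl_1d (g : R -> R) h x y dg hx hy :
  derivable_pt_lim g (h x y) dg -> differentiable_pt_lim h x y hx hy ->
  differentiable_pt_lim (fun u v => g (h u v)) x y (dg * hx) (dg * hy).
Proof.
  intros Hg Hh.
  eapply dpl_eq. apply (differentiable_pt_lim_comp (fun a _ => g a) h h x y).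
  apply differentiable_pt_lim_proj1_0. exact Hg. exact Hh. exact Hh. ring. ring.
Qed.

Definition Cexp (z : C) : C := (exp (fst z) * cos (snd z), exp (fst z) * sin (snd z)).

Lemma is_derive_Cexp (z : C) : @is_derive C_AbsRing C_NormedModule Cexp z (Cexp z).
Proof.
  destruct z as [x y]. unfold Cexp at 2. simpl.
  apply CR.
  - eapply dpl_eq. apply (dpl_mult (fun u v => exp u) (fun u v => cos v)).
    apply (dpl_1d exp (fun u v => u)). apply derivable_pt_lim_exp. apply dpl_fst.
    apply (dpl_1d cos (fun u v => v)). apply derivable_pt_lim_cos. apply dpl_snd.
    simpl; ring. simpl; ring.
  - eapply dpl_eq. apply (dpl_mult (fun u v => exp u) (fun u v => sin v)).
    apply (dpl_1d exp (fun u v => u)). apply derivable_pt_lim_exp. apply dpl_fst.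
    apply (dpl_1d sin (fun u v => v)). apply derivable_pt_lim_sin. apply dpl_snd.
    simpl; ring. simpl; ring.
Qed.

Lemma dpl_fe f g x y lx ly lx' ly' :
  (forall u v, f u v = g u v) -> differentiable_pt_lim f x y lx ly -> lx = lx' -> ly = ly' ->
  differentiable_pt_lim g x y lx' ly'.
Proof. intros H1 H2 -> ->. eapply dpl_fext; eauto. Qed.

Lemma dl_inv x : x <> 0 -> derivable_pt_lim (fun t => / t) x (- 1 / x ^ 2).
Proof.
  intros Hx. apply is_derive_Reals. apply (is_derive_inv (fun t => t) x 1).
  apply (@is_derive_id R_AbsRing). exact Hx.
Qed.

Definition Clog (z : C) : C := (ln (Cmod z), Arg_rhp z).

Lemma is_derive_Clog (z : C) : 0 < fst z ->
  @is_derive C_AbsRing C_NormedModule Clog z (Cinv z).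
Proof.
  destruct z as [x y]. cbn [fst]. intros Hx.
  assert (HS : 0 < x ^ 2 + y ^ 2) by nra.
  assert (Hsq : 0 < sqrt (x ^ 2 + y ^ 2)) by (apply sqrt_lt_R0; exact HS).
  assert (Hss := sqrt_sqrt (x^2+y^2) (Rlt_le _ _ HS)).
  change (Cinv (x,y)) with (x/(x^2+y^2), -y/(x^2+y^2)).
  apply CR.
  { eapply (dpl_fe (fun u v => ln (sqrt (u^2+v^2)))). intros; reflexivity.
    apply (dpl_1d ln (fun u v => sqrt (u ^ 2 + v ^ 2))).
    apply derivable_pt_lim_ln. exact Hsq.
    apply (dpl_1d sqrt (fun u v => u ^ 2 + v ^ 2)).
    apply derivable_pt_lim_sqrt. exact HS.
    apply (dpl_plus (fun u v => u ^ 2) (fun u v => v ^ 2)).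
    apply (dpl_1d (fun t => t ^ 2) (fun u v => u)). apply derivable_pt_lim_pow. apply dpl_fst.
    apply (dpl_1d (fun t => t ^ 2) (fun u v => v)). apply derivable_pt_lim_pow. apply dpl_snd.
    1,2: cbn [Init.Nat.pred]; replace (INR 2) with 2 by (simpl; ring); set (q := sqrt (x^2+y^2)) in *; rewrite <- Hss; field; lra. }
  { eapply (dpl_fe (fun u v => atan (v * / u))). intros; reflexivity.
    apply (dpl_1d atan (fun u v => v * / u)).
    apply derivable_pt_lim_atan.
    apply (dpl_mult (fun u v => v) (fun u v => / u)).
    apply dpl_snd.
    apply (dpl_1d (fun t => / t) (fun u v => u)). apply dl_inv. lra. apply dpl_fst.
    all: field; lra. }
Qed.

Lemma convA f z l : @is_derive C_AbsRing (AbsRing_NormedModule C_AbsRing) f z l -> @is_derive C_AbsRing C_NormedModule f z l.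
Proof. intros [_ H]; split. apply is_linear_scal_l. intros x Hx eps. specialize (H x Hx eps). revert H.
  apply filter_imp. intros y h. exact h. Qed.
Lemma convB f z l : @is_derive C_AbsRing C_NormedModule f z l -> @is_derive C_AbsRing (AbsRing_NormedModule C_AbsRing) f z l.
Proof. intros [_ H]; split. apply is_linear_scal_l. intros x Hx eps. specialize (H x Hx eps). revert H.
  apply filter_imp. intros y h. exact h. Qed.

Lemma is_derive_eqC (f : C -> C) z l l' :
  @is_derive C_AbsRing C_NormedModule f z l -> l = l' -> @is_derive C_AbsRing C_NormedModule f z l'.
Proof. intros H <-; exact H. Qed.

Lemma cpowR_eq u s : cpowR u s = Cexp (Cmult (RtoC s) (Clog u)).
Proof.
  unfold cpowR, Cexp, Clog; simpl.
  f_equal; f_equal; f_equal; ring.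
Qed.

Lemma is_derive_cpowR u s : 0 < fst u ->
  @is_derive C_AbsRing C_NormedModule (fun v => cpowR v s) u
    (Cmult (Cmult (RtoC s) (Cinv u)) (cpowR u s)).
Proof.
  intros Hu.
  apply is_derive_ext with (f := fun v => Cexp (Cmult (RtoC s) (Clog v))).
  { intros t; symmetry; apply cpowR_eq. }
  eapply is_derive_eqC.
  { apply (@is_derive_comp C_AbsRing C_NormedModule Cexp (fun v => Cmult (RtoC s) (Clog v))).
    apply is_derive_Cexp.
    apply (@is_derive_mult C_AbsRing (fun _ => RtoC s) Clog).
    apply (@is_derive_const C_AbsRing (AbsRing_NormedModule C_AbsRing)).
    apply convB. apply is_derive_Clog. exact Hu.
    apply Cmult_comm. }
  rewrite <- cpowR_eq.
  change (Cmult (Cplus (Cmult (RtoC 0) (Clog u)) (Cmult (RtoC s) (Cinv u))) (cpowR u s) =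
    Cmult (Cmult (RtoC s) (Cinv u)) (cpowR u s)).
  ring.
Qed.

Lemma cpown_Cpow z n : cpown z n = Cpow z n.
Proof. induction n; simpl; [reflexivity|rewrite IHn; reflexivity]. Qed.

Lemma is_derive_cpown z n :
  @is_derive C_AbsRing C_NormedModule (fun t => cpown t n) z (Cmult (RtoC (INR n)) (cpown z (pred n))).
Proof.
  induction n as [|n IH].
  - simpl. eapply is_derive_eqC. apply convA. apply (@is_derive_const C_AbsRing (AbsRing_NormedModule C_AbsRing)).
    change (RtoC 0 = Cmult (RtoC 0) (RtoC 1)). ring.
  - simpl cpown. eapply is_derive_eqC. apply convA.
    apply (@is_derive_mult C_AbsRing (fun t => t) (fun t => cpown t n)).
    apply (@is_derive_id C_AbsRing). apply convB, IH. apply Cmult_comm.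
    change (Cplus (Cmult (RtoC 1) (cpown z n)) (Cmult z (Cmult (RtoC (INR n)) (cpown z (pred n)))) =
      Cmult (RtoC (INR (S n))) (cpown z n)).
    destruct n as [|m].
    + simpl. change (RtoC 0) with (RtoC (INR 0)). simpl. ring.
    + simpl pred. simpl cpown. rewrite (S_INR (S m)). rewrite (RtoC_plus (INR (S m)) 1). ring.
Qed.

Lemma Cinv_cpowR U s : Cinv (cpowR U s) = cpowR U (- s).
Proof.
  unfold cpowR. cbv zeta.
  set (L := ln (Cmod U)). set (t := Arg_rhp U).
  replace (- s * L) with (- (s * L)) by ring.
  replace (- s * t) with (- (s * t)) by ring.
  rewrite exp_Ropp, cos_neg, sin_neg.
  set (m := exp (s * L)). assert (Hm : 0 < m) by apply exp_pos.
  assert (Hcs := sin2_cos2 (s * t)). unfold Rsqr in Hcs.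
  unfold Cinv; simpl.
  assert (E : m * cos (s * t) * (m * cos (s * t) * 1) + m * sin (s * t) * (m * sin (s * t) * 1) = m * m).
  { replace (m * m) with (m * m * (sin (s * t) * sin (s * t) + cos (s * t) * cos (s * t))) by (rewrite Hcs; ring). ring. }
  rewrite E. f_equal; field; lra.
Qed.

Lemma fw_eq alpha i w z :
  fw alpha i w z = Cmult (cpown z i) (cpowR (Cminus (RtoC 1) (Cmult (Cconj w) z)) (- (alpha + INR i))).
Proof. unfold fw, Cdiv. rewrite Cinv_cpowR. reflexivity. Qed.

Definition Uw (w z : C) : C := Cminus (RtoC 1) (Cmult (Cconj w) z).

Definition dfw (alpha : R) (i : nat) (w z : C) : C :=
  Cplus (Cmult (Cmult (RtoC (INR i)) (cpown z (pred i))) (cpowR (Uw w z) (- (alpha + INR i))))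
        (Cmult (cpown z i) (Cmult (Copp (Cconj w))
            (Cmult (Cmult (RtoC (- (alpha + INR i))) (Cinv (Uw w z))) (cpowR (Uw w z) (- (alpha + INR i)))))).

Lemma Cmod_sq_lt1 z : inD z -> fst z ^ 2 + snd z ^ 2 < 1.
Proof.
  unfold inD. intros H. pose proof (Cmod2_alt z) as E. unfold Re, Im in E.
  assert (0 <= Cmod z) by apply Cmod_ge_0. nra.
Qed.

Lemma Re_Uw_pos w z : inD w -> inD z -> 0 < fst (Uw w z).
Proof.
  intros Hw Hz. apply Cmod_sq_lt1 in Hw. apply Cmod_sq_lt1 in Hz.
  destruct w as [a b]; destruct z as [x y]. simpl in *.
  assert (0 <= (a - x) * (a - x)) by apply Rle_0_sqr.
  assert (0 <= (b - y) * (b - y)) by apply Rle_0_sqr. nra.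
Qed.

Lemma is_derive_fw alpha i w z : inD w -> inD z ->
  @is_derive C_AbsRing C_NormedModule (fw alpha i w) z (dfw alpha i w z).
Proof.
  intros Hw Hz.
  apply is_derive_ext with (f := fun t => Cmult (cpown t i) (cpowR (Uw w t) (- (alpha + INR i)))).
  { intros t. rewrite fw_eq. reflexivity. }
  eapply is_derive_eqC. apply convA.
  apply (@is_derive_mult C_AbsRing (fun t => cpown t i) (fun t => cpowR (Uw w t) (- (alpha + INR i)))).
  apply convB, is_derive_cpown.
  apply convB. apply (@is_derive_comp C_AbsRing C_NormedModule (fun v => cpowR v (- (alpha + INR i))) (Uw w)).
  apply is_derive_cpowR. apply Re_Uw_pos; assumption.
  { apply (@is_derive_minus C_AbsRing (AbsRing_NormedModule C_AbsRing) (fun _ => RtoC 1) (fun t => Cmult (Cconj w) t)).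
    apply (@is_derive_const C_AbsRing (AbsRing_NormedModule C_AbsRing)).
    apply (@is_derive_mult C_AbsRing (fun _ => Cconj w) (fun t => t)).
    apply (@is_derive_const C_AbsRing (AbsRing_NormedModule C_AbsRing)).
    apply (@is_derive_id C_AbsRing). apply Cmult_comm. }
  apply Cmult_comm.
  unfold dfw.
  change (Cplus (Cmult (Cmult (RtoC (INR i)) (cpown z (pred i))) (cpowR (Uw w z) (- (alpha + INR i))))
    (Cmult (cpown z i) (Cmult (Cminus (RtoC 0) (Cplus (Cmult (RtoC 0) z) (Cmult (Cconj w) (RtoC 1))))
       (Cmult (Cmult (RtoC (- (alpha + INR i))) (Cinv (Uw w z))) (cpowR (Uw w z) (- (alpha + INR i)))))) = 
    Cplus (Cmult (Cmult (RtoC (INR i)) (cpown z (pred i))) (cpowR (Uw w z) (- (alpha + INR i))))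
        (Cmult (cpown z i) (Cmult (Copp (Cconj w))
            (Cmult (Cmult (RtoC (- (alpha + INR i))) (Cinv (Uw w z))) (cpowR (Uw w z) (- (alpha + INR i))))))).
  ring.
Qed.

Lemma exp_le x y : x <= y -> exp x <= exp y.
Proof. intros [H|H]. left; apply exp_increasing; auto. subst; lra. Qed.

Lemma Bnorm_upper alpha f M :
  (forall z l, inD z -> @is_derive C_AbsRing C_NormedModule f z l ->
     Rpower (1 - Cmod z ^ 2) alpha * Cmod l <= M) ->
  Rbar_le (Bnorm alpha f) (Finite (Cmod (f (RtoC 0)) + M)).
Proof.
  intros H. unfold Bnorm.
  destruct (Lub_Rbar_correct (fun r => exists z : C, inD z /\
        exists l : C, @is_derive C_AbsRing C_NormedModule f z l /\
        r = Rpower (1 - Cmod z ^ 2) alpha * Cmod l)) as [_ Hl].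
  assert (Hb : Rbar_le (Lub_Rbar (fun r => exists z : C, inD z /\
        exists l : C, @is_derive C_AbsRing C_NormedModule f z l /\
        r = Rpower (1 - Cmod z ^ 2) alpha * Cmod l)) (Finite M)).
  { apply Hl. intros r [z [Hz [l [Hd ->]]]]. simpl. apply H; auto. }
  revert Hb. destruct (Lub_Rbar _) as [L| |]; simpl; intros Hb; try lra; try tauto.
Qed.

Lemma Bnorm_lower alpha f z l c :
  inD z -> @is_derive C_AbsRing C_NormedModule f z l ->
  c <= Cmod (f (RtoC 0)) + Rpower (1 - Cmod z ^ 2) alpha * Cmod l ->
  Rbar_le (Finite c) (Bnorm alpha f).
Proof.
  intros Hz Hd Hc. unfold Bnorm.
  destruct (Lub_Rbar_correct (fun r => exists z : C, inD z /\
        exists l : C, @is_derive C_AbsRing C_NormedModule f z l /\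
        r = Rpower (1 - Cmod z ^ 2) alpha * Cmod l)) as [Hu _].
  assert (Hb := Hu (Rpower (1 - Cmod z ^ 2) alpha * Cmod l) (ex_intro _ z (conj Hz (ex_intro _ l (conj Hd eq_refl))))).
  revert Hb. destruct (Lub_Rbar _) as [L| |]; simpl in *; intros Hb; try lra; try tauto.
Qed.

Lemma Cmod_cpowR U s : Cmod (cpowR U s) = exp (s * ln (Cmod U)).
Proof.
  unfold cpowR, Cmod at 1. cbv zeta. simpl.
  set (m := exp (s * ln (Cmod U))). set (t := s * Arg_rhp U).
  assert (Hcs := sin2_cos2 t). unfold Rsqr in Hcs.
  replace (m * cos t * (m * cos t * 1) + m * sin t * (m * sin t * 1)) with (m * m)
    by (replace (m * m) with (m * m * (sin t * sin t + cos t * cos t)) by (rewrite Hcs; ring); ring).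
  apply sqrt_square. unfold m; left; apply exp_pos.
Qed.

Lemma Cmod_cpown z n : Cmod (cpown z n) = Cmod z ^ n.
Proof. rewrite cpown_Cpow. apply Cmod_pow. Qed.

Lemma Uw_nz w z : inD w -> inD z -> Uw w z <> RtoC 0.
Proof. intros Hw Hz E. pose proof (Re_Uw_pos w z Hw Hz) as H. rewrite E in H. simpl in H. lra. Qed.

Lemma dfw_S alpha k w z : inD w -> inD z ->
  dfw alpha (S k) w z = Cmult (Cmult (cpown z k) (Cmult (cpowR (Uw w z) (- (alpha + INR (S k)))) (Cinv (Uw w z))))
     (Cplus (RtoC (INR (S k))) (Cmult (RtoC alpha) (Cmult (Cconj w) z))).
Proof.
  intros Hw Hz. assert (HU := Uw_nz w z Hw Hz).
  unfold dfw. simpl pred. change (cpown z (S k)) with (Cmult z (cpown z k)).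
  rewrite RtoC_opp, RtoC_plus.
  revert HU. unfold Uw. intros HU. field. exact HU.
Qed.

Lemma dfw_0 alpha w z : inD w -> inD z ->
  dfw alpha 0 w z = Cmult (RtoC alpha) (Cmult (Cconj w) (Cmult (cpowR (Uw w z) (- (alpha + INR 0))) (Cinv (Uw w z)))).
Proof.
  intros Hw Hz. assert (HU := Uw_nz w z Hw Hz).
  unfold dfw. simpl pred. simpl INR. change (cpown z 0) with (RtoC 1).
  rewrite RtoC_opp, RtoC_plus.
  field. exact HU.
Qed.

Lemma Cmod_RtoC_pos r : 0 <= r -> Cmod (RtoC r) = r.
Proof. intros H. rewrite Cmod_R. apply Rabs_pos_eq, H. Qed.

Lemma Cmod_dfw_S alpha k w z : inD w -> inD z ->
  Cmod (dfw alpha (S k) w z) = Cmod z ^ k * (exp (- (alpha + INR (S k)) * ln (Cmod (Uw w z))) * / Cmod (Uw w z))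
     * Cmod (Cplus (RtoC (INR (S k))) (Cmult (RtoC alpha) (Cmult (Cconj w) z))).
Proof.
  intros Hw Hz. rewrite dfw_S by auto.
  rewrite !Cmod_mult, Cmod_cpown, Cmod_cpowR, Cmod_inv by (apply Uw_nz; auto). reflexivity.
Qed.

Lemma Cmod_dfw_0 alpha w z : 0 < alpha -> inD w -> inD z ->
  Cmod (dfw alpha 0 w z) = alpha * Cmod w * (exp (- (alpha + INR 0) * ln (Cmod (Uw w z))) * / Cmod (Uw w z)).
Proof.
  intros Ha Hw Hz. rewrite dfw_0 by auto.
  rewrite !Cmod_mult, Cmod_cpowR, Cmod_inv by (apply Uw_nz; auto).
  rewrite Cmod_RtoC_pos by lra. rewrite Cmod_conj. ring.
Qed.

Lemma Uw_lower w z : 1 - Cmod w * Cmod z <= Cmod (Uw w z).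
Proof.
  assert (E : RtoC 1 = Cplus (Uw w z) (Cmult (Cconj w) z)) by (unfold Uw; ring).
  pose proof (Cmod_triangle (Uw w z) (Cmult (Cconj w) z)) as T.
  rewrite <- E, Cmod_RtoC_pos, Cmod_mult, Cmod_conj in T by lra. lra.
Qed.

Lemma fw0_S alpha k w : Cmod (fw alpha (S k) w (RtoC 0)) = 0.
Proof.
  rewrite fw_eq, Cmod_mult, Cmod_cpown, Cmod_0. simpl. ring.
Qed.

Lemma fw0_0 alpha w : Cmod (fw alpha 0 w (RtoC 0)) = 1.
Proof.
  rewrite fw_eq, Cmod_mult, Cmod_cpown, Cmod_cpowR.
  replace (Cminus (RtoC 1) (Cmult (Cconj w) (RtoC 0))) with (RtoC 1) by ring.
  rewrite (Cmod_RtoC_pos 1) by lra. rewrite ln_1. simpl. rewrite Rmult_0_r, exp_0. ring.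
Qed.

Lemma key_exp (a u : R) (n : nat) : 0 < u ->
  exp (a * ln u) * exp (- (a + INR n) * ln u) = / u ^ n.
Proof.
  intros Hu. rewrite <- exp_plus.
  replace (a * ln u + - (a + INR n) * ln u) with (- (INR n * ln u)) by ring.
  rewrite exp_Ropp, <- ln_pow by exact Hu. rewrite exp_ln. reflexivity. apply pow_lt, Hu.
Qed.

Lemma inv_le_aux A B C : 0 < A -> 0 < C -> 0 < B -> C <= B * A -> / A <= B * / C.
Proof.
  intros HA HC HB H.
  replace (/ A) with (/ A * C * / C) by (field; lra).
  apply Rmult_le_compat_r. left; apply Rinv_0_lt_compat, HC.
  replace B with (/ A * (B * A)) by (field; lra).
  apply Rmult_le_compat_l. left; apply Rinv_0_lt_compat, HA. exact H.
Qed.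

Lemma upper_real (a mu rho u : R) (n : nat) : 0 < a -> 0 <= mu < 1 -> 0 <= rho < 1 -> 1 - mu * rho <= u ->
  exp (a * ln (1 - rho ^ 2)) * (exp (- (a + INR n) * ln u) * / u)
    <= exp (a * ln 2) * 2 ^ (n + 1) / (1 - mu ^ 2) ^ (n + 1).
Proof.
  intros Ha Hmu Hrho Hu.
  assert (Hu0 : 0 < u) by nra.
  assert (H1 : 1 - rho ^ 2 <= 2 * u) by nra.
  assert (H2 : exp (a * ln (1 - rho ^ 2)) <= exp (a * ln 2) * exp (a * ln u)).
  { rewrite <- exp_plus. apply exp_le. rewrite <- Rmult_plus_distr_l, <- ln_mult by lra.
    apply Rmult_le_compat_l. lra. apply ln_le. nra. exact H1. }
  assert (HE : 0 < exp (- (a + INR n) * ln u) * / u) by (apply Rmult_lt_0_compat; [apply exp_pos|apply Rinv_0_lt_compat; lra]).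
  eapply Rle_trans. apply Rmult_le_compat_r. lra. exact H2.
  replace (exp (a * ln 2) * exp (a * ln u) * (exp (- (a + INR n) * ln u) * / u))
    with (exp (a * ln 2) * ((exp (a * ln u) * exp (- (a + INR n) * ln u)) * / u)) by ring.
  rewrite key_exp by exact Hu0.
  unfold Rdiv. rewrite Rmult_assoc. apply Rmult_le_compat_l. left; apply exp_pos.
  assert (H3 : 0 < 1 - mu ^ 2) by nra.
  assert (H4 : (1 - mu ^ 2) ^ (n + 1) <= 2 ^ (n + 1) * u ^ (n + 1)).
  { rewrite <- Rpow_mult_distr. apply pow_incr. split. nra. nra. }
  assert (H5 : 0 < (1 - mu ^ 2) ^ (n + 1)) by (apply pow_lt; exact H3).
  assert (H6 : 0 < u ^ (n + 1)) by (apply pow_lt; exact Hu0).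
  replace (/ u ^ n * / u) with (/ u ^ (n + 1)).
  2:{ rewrite pow_add, pow_1, Rinv_mult. reflexivity. }
  apply inv_le_aux; try assumption. apply pow_lt; lra.
Qed.

Lemma conj_self w : Cmult (Cconj w) w = RtoC (Cmod w ^ 2).
Proof. rewrite (Cmod2_conj w). apply Cmult_comm. Qed.

Lemma Uw_self w : Uw w w = RtoC (1 - Cmod w ^ 2).
Proof. unfold Uw. rewrite conj_self, RtoC_minus. reflexivity. Qed.

Lemma exists_z0 w : exists z0, Cmod z0 = 1/2 /\ Cmult (Cconj w) z0 = RtoC (Cmod w / 2).
Proof.
  destruct (Req_dec (Cmod w) 0) as [H|H].
  - exists (RtoC (1/2)). split. apply Cmod_RtoC_pos; lra.
    apply Cmod_eq_0 in H as H'. rewrite H, H'.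
    apply injective_projections; simpl; lra.
  - assert (Hp : 0 < Cmod w) by (pose proof (Cmod_ge_0 w); lra).
    exists (Cmult (RtoC (/ (2 * Cmod w))) w). split.
    + rewrite Cmod_mult, Cmod_RtoC_pos. field. lra. left; apply Rinv_0_lt_compat; lra.
    + replace (Cmult (Cconj w) (Cmult (RtoC (/ (2 * Cmod w))) w)) with (Cmult (RtoC (/ (2 * Cmod w))) (Cmult (Cconj w) w)) by ring.
      rewrite conj_self, <- RtoC_mult. f_equal. field. lra.
Qed.

Lemma inD_lt w : inD w -> 0 <= Cmod w < 1.
Proof. unfold inD; intros; split; [apply Cmod_ge_0|auto]. Qed.

Lemma dfw_unique alpha i w z l : inD w -> inD z ->
  @is_derive C_AbsRing C_NormedModule (fw alpha i w) z l -> l = dfw alpha i w z.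
Proof.
  intros Hw Hz Hd. rewrite <- (is_C_derive_unique _ _ _ Hd).
  apply is_C_derive_unique, is_derive_fw; auto.
Qed.

Lemma N_upper alpha k w z : 0 < alpha -> inD w -> inD z ->
  Cmod (Cplus (RtoC (INR (S k))) (Cmult (RtoC alpha) (Cmult (Cconj w) z))) <= INR (S k) + alpha.
Proof.
  intros Ha Hw Hz. apply inD_lt in Hw. apply inD_lt in Hz.
  eapply Rle_trans. apply Cmod_triangle.
  rewrite !Cmod_mult, Cmod_conj, !Cmod_RtoC_pos by (try apply pos_INR; lra).
  assert (Cmod w * Cmod z <= 1) by nra. nra.
Qed.

Lemma pow_le1 x n : 0 <= x <= 1 -> x ^ n <= 1.
Proof. intros H. rewrite <- (pow1 n). apply pow_incr. exact H. Qed.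

Lemma part_pos alpha k : 0 < alpha ->
  exists C1 C2 : R, 0 < C1 /\ 0 < C2 /\
      forall w : C, inD w ->
        analytic_on_D (fw alpha (S k) w) /\
        Rbar_le (Finite (C1 / (1 - Cmod w ^ 2) ^ (S k + 1))) (Bnorm alpha (fw alpha (S k) w)) /\
        Rbar_le (Bnorm alpha (fw alpha (S k) w)) (Finite (C2 / (1 - Cmod w ^ 2) ^ (S k + 1))).
Proof.
  intros Ha.
  assert (HI : 1 <= INR (S k)) by (rewrite S_INR; pose proof (pos_INR k); lra).
  assert (Hl34 : ln (3/4) < 0) by (rewrite <- ln_1; apply ln_increasing; lra).
  assert (He34 : exp (alpha * ln (3/4)) <= 1) by (rewrite <- exp_0; apply exp_le; nra).
  set (C1 := exp (alpha * ln (3/4)) * (1/2) ^ k * (3/4) ^ (S k + 1)).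
  set (C2 := (INR (S k) + alpha) * (exp (alpha * ln 2) * 2 ^ (S k + 1))).
  assert (HC1 : 0 < C1) by (unfold C1; apply Rmult_lt_0_compat; [apply Rmult_lt_0_compat; [apply exp_pos|apply pow_lt; lra]|apply pow_lt; lra]).
  assert (HC2 : 0 < C2) by (unfold C2; apply Rmult_lt_0_compat; [lra|apply Rmult_lt_0_compat; [apply exp_pos|apply pow_lt; lra]]).
  exists C1, C2. split; [exact HC1|split; [exact HC2|]].
  intros w Hw. pose proof (inD_lt w Hw) as [Hm0 Hm1].
  set (mu := Cmod w) in *.
  assert (Hv : 0 < 1 - mu ^ 2) by nra.
  assert (Hvn : 0 < (1 - mu ^ 2) ^ (S k + 1)) by (apply pow_lt; exact Hv).
  split; [|split].
  - intros z Hz. exists (dfw alpha (S k) w z). apply is_derive_fw; auto.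
  - destruct (Rle_or_lt (1/2) mu) as [Hbig|Hsmall].
    + apply (Bnorm_lower alpha _ w (dfw alpha (S k) w w)). exact Hw. apply is_derive_fw; auto.
      rewrite fw0_S, Rplus_0_l, Cmod_dfw_S by auto.
      rewrite Uw_self. fold mu.
      replace (Cplus (RtoC (INR (S k))) (Cmult (RtoC alpha) (Cmult (Cconj w) w))) with (RtoC (INR (S k) + alpha * mu ^ 2))
        by (rewrite conj_self, RtoC_plus, RtoC_mult; reflexivity).
      rewrite !Cmod_RtoC_pos by nra.
      unfold Rpower.
      replace (exp (alpha * ln (1 - mu ^ 2)) * (mu ^ k * (exp (- (alpha + INR (S k)) * ln (1 - mu ^ 2)) * / (1 - mu ^ 2)) * (INR (S k) + alpha * mu ^ 2)))
        with ((exp (alpha * ln (1 - mu ^ 2)) * exp (- (alpha + INR (S k)) * ln (1 - mu ^ 2))) * / (1 - mu ^ 2) * (mu ^ k * (INR (S k) + alpha * mu ^ 2))) by ring.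
      rewrite key_exp by exact Hv.
      replace (/ (1 - mu ^ 2) ^ S k * / (1 - mu ^ 2)) with (/ (1 - mu ^ 2) ^ (S k + 1))
        by (rewrite pow_add, pow_1, Rinv_mult; reflexivity).
      unfold Rdiv. rewrite Rmult_comm. apply Rmult_le_compat_l. left; apply Rinv_0_lt_compat; exact Hvn.
      assert (P1 : (1/2) ^ k <= mu ^ k) by (apply pow_incr; lra).
      assert (P2 : (3/4) ^ (S k + 1) <= 1) by (apply pow_le1; lra).
      assert (P3 : 0 <= (1/2) ^ k) by (apply pow_le; lra).
      assert (P4 : 0 < exp (alpha * ln (3/4))) by apply exp_pos.
      assert (P5 : 0 <= (3/4) ^ (S k + 1)) by (apply pow_le; lra).
      assert (P6 : 1 <= INR (S k) + alpha * mu ^ 2) by nra.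
      unfold C1.
      apply Rle_trans with ((1/2) ^ k).
      { replace ((1/2) ^ k) with (1 * (1/2) ^ k * 1) at 2 by ring.
        apply Rmult_le_compat; try nra. }
      apply Rle_trans with (mu ^ k * 1). lra. apply Rmult_le_compat_l. apply pow_le; lra. exact P6.
    + destruct (exists_z0 w) as [z0 [Hz0m Hz0c]]. fold mu in Hz0c.
      assert (Hz0 : inD z0) by (unfold inD; lra).
      apply (Bnorm_lower alpha _ z0 (dfw alpha (S k) w z0)). exact Hz0. apply is_derive_fw; auto.
      rewrite fw0_S, Rplus_0_l, Cmod_dfw_S by auto.
      replace (Uw w z0) with (RtoC (1 - mu / 2)) by (unfold Uw; rewrite Hz0c, RtoC_minus; reflexivity).
      rewrite Hz0c.
      replace (Cplus (RtoC (INR (S k))) (Cmult (RtoC alpha) (RtoC (mu / 2)))) with (RtoC (INR (S k) + alpha * (mu / 2)))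
        by (rewrite RtoC_plus, RtoC_mult; reflexivity).
      rewrite !Cmod_RtoC_pos by nra. rewrite Hz0m.
      unfold Rpower. replace (1 - (1/2) ^ 2) with (3/4) by field.
      assert (Q1 : 1 <= exp (- (alpha + INR (S k)) * ln (1 - mu / 2))).
      { apply Rle_trans with (exp 0). rewrite exp_0; lra. apply exp_le.
        assert (ln (1 - mu / 2) <= 0) by (rewrite <- ln_1; apply ln_le; lra). assert (0 < alpha + INR (S k)) by lra. nra. }
      assert (Q2 : 1 <= / (1 - mu / 2)).
      { rewrite <- Rinv_1. apply Rinv_le_contravar; lra. }
      assert (Q3 : 1 <= INR (S k) + alpha * (mu / 2)) by nra.
      assert (P3 : 0 < (1/2) ^ k) by (apply pow_lt; lra).
      assert (P4 : 0 < exp (alpha * ln (3/4))) by apply exp_pos.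
      apply Rle_trans with (exp (alpha * ln (3/4)) * (1/2) ^ k).
      { assert (K1 : (3/4)^(S k+1) <= (1-mu^2)^(S k+1)) by (apply pow_incr; split; nra).
        assert (K : (3/4)^(S k+1) * / (1-mu^2)^(S k+1) <= 1).
        { apply (Rmult_le_reg_r ((1-mu^2)^(S k+1))). exact Hvn. rewrite Rmult_assoc, Rinv_l by lra. lra. }
        unfold C1, Rdiv. rewrite Rmult_assoc.
        rewrite <- (Rmult_1_r (exp (alpha * ln (3/4)) * (1/2) ^ k)) at 2.
        apply Rmult_le_compat_l. nra. exact K. }
      set (X := exp (- (alpha + INR (S k)) * ln (1 - mu / 2))) in *.
      set (Y := / (1 - mu / 2)) in *.
      set (Z := INR (S k) + alpha * (mu / 2)) in *.
      assert (XY : 1 <= X * Y) by nra.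
      assert (XYZ : 1 <= X * Y * Z) by nra.
      apply Rle_trans with (exp (alpha * ln (3/4)) * (1/2) ^ k * (X * Y * Z)).
      { rewrite <- (Rmult_1_r (exp (alpha * ln (3/4)) * (1/2) ^ k)) at 1. apply Rmult_le_compat_l; nra. }
      right; ring.
  - replace (C2 / (1 - mu ^ 2) ^ (S k + 1)) with (Cmod (fw alpha (S k) w (RtoC 0)) + C2 / (1 - mu ^ 2) ^ (S k + 1))
      by (rewrite fw0_S; ring).
    apply Bnorm_upper. intros z l Hz Hd.
    rewrite (dfw_unique alpha (S k) w z l Hw Hz Hd).
    rewrite Cmod_dfw_S by auto.
    pose proof (inD_lt z Hz) as [Hr0 Hr1].
    pose proof (Uw_lower w z) as HU. fold mu in HU.
    assert (HU0 : 0 < Cmod (Uw w z)) by nra.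
    pose proof (upper_real alpha mu (Cmod z) (Cmod (Uw w z)) (S k) Ha (conj Hm0 Hm1) (conj Hr0 Hr1) HU) as UR.
    pose proof (N_upper alpha k w z Ha Hw Hz) as HN.
    unfold Rpower.
    set (A := exp (alpha * ln (1 - Cmod z ^ 2))) in *.
    set (B := exp (- (alpha + INR (S k)) * ln (Cmod (Uw w z))) * / Cmod (Uw w z)) in *.
    set (N := Cmod (Cplus (RtoC (INR (S k))) (Cmult (RtoC alpha) (Cmult (Cconj w) z)))) in *.
    assert (HA : 0 < A) by apply exp_pos.
    assert (HB : 0 < B) by (apply Rmult_lt_0_compat; [apply exp_pos|apply Rinv_0_lt_compat; lra]).
    assert (HN0 : 0 <= N) by apply Cmod_ge_0.
    assert (Hrk : Cmod z ^ k <= 1) by (apply pow_le1; lra).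
    assert (Hrk0 : 0 <= Cmod z ^ k) by (apply pow_le; lra).
    apply Rle_trans with (A * B * (INR (S k) + alpha)).
    { replace (A * (Cmod z ^ k * B * N)) with (A * B * (Cmod z ^ k * N)) by ring.
      apply Rmult_le_compat_l. nra.
      replace (INR (S k) + alpha) with (1 * (INR (S k) + alpha)) by ring.
      apply Rmult_le_compat; lra. }
    unfold C2. unfold Rdiv.
    replace ((INR (S k) + alpha) * (exp (alpha * ln 2) * 2 ^ (S k + 1)) * / (1 - mu ^ 2) ^ (S k + 1))
      with ((exp (alpha * ln 2) * 2 ^ (S k + 1) * / (1 - mu ^ 2) ^ (S k + 1)) * (INR (S k) + alpha)) by ring.
    apply Rmult_le_compat_r. lra. exact UR.
Qed.

Lemma part_zero alpha : 0 < alpha ->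
  exists C1 C2 : R, 0 < C1 /\ 0 < C2 /\
      forall w : C, inD w -> 1 / 2 < Cmod w ->
        analytic_on_D (fw alpha 0 w) /\
        Rbar_le (Finite (C1 / (1 - Cmod w ^ 2))) (Bnorm alpha (fw alpha 0 w)) /\
        Rbar_le (Bnorm alpha (fw alpha 0 w)) (Finite (C2 / (1 - Cmod w ^ 2))).
Proof.
  intros Ha.
  set (M0 := alpha * (exp (alpha * ln 2) * 2 ^ (0 + 1))).
  assert (HM0 : 0 < M0) by (unfold M0; apply Rmult_lt_0_compat; [lra|apply Rmult_lt_0_compat; [apply exp_pos|apply pow_lt; lra]]).
  exists (alpha / 2), (1 + M0). split; [lra|split; [lra|]].
  intros w Hw Hbig. pose proof (inD_lt w Hw) as [Hm0 Hm1].
  set (mu := Cmod w) in *.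
  assert (Hv : 0 < 1 - mu ^ 2) by nra.
  split; [|split].
  - intros z Hz. exists (dfw alpha 0 w z). apply is_derive_fw; auto.
  - apply (Bnorm_lower alpha _ w (dfw alpha 0 w w)). exact Hw. apply is_derive_fw; auto.
    rewrite fw0_0, Cmod_dfw_0 by auto.
    rewrite Uw_self. fold mu. rewrite Cmod_RtoC_pos by lra.
    unfold Rpower.
    replace (exp (alpha * ln (1 - mu ^ 2)) * (alpha * mu * (exp (- (alpha + INR 0) * ln (1 - mu ^ 2)) * / (1 - mu ^ 2))))
      with ((exp (alpha * ln (1 - mu ^ 2)) * exp (- (alpha + INR 0) * ln (1 - mu ^ 2))) * (alpha * mu * / (1 - mu ^ 2))) by ring.
    rewrite key_exp by exact Hv. rewrite pow_O, Rinv_1, Rmult_1_l.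
    unfold Rdiv.
    assert (0 < / (1 - mu ^ 2)) by (apply Rinv_0_lt_compat; lra).
    assert (0 <= alpha * (mu - 1/2) * / (1 - mu ^ 2)) by (apply Rmult_le_pos; [apply Rmult_le_pos|]; lra).
    nra.
  - apply Rbar_le_trans with (Finite (Cmod (fw alpha 0 w (RtoC 0)) + M0 / (1 - mu ^ 2))).
    2:{ simpl. rewrite fw0_0. unfold Rdiv. rewrite Rmult_plus_distr_r, Rmult_1_l.
        apply Rplus_le_compat_r. rewrite <- Rinv_1 at 1. apply Rinv_le_contravar; nra. }
    apply Bnorm_upper. intros z l Hz Hd.
    rewrite (dfw_unique alpha 0 w z l Hw Hz Hd).
    rewrite Cmod_dfw_0 by auto.
    pose proof (inD_lt z Hz) as [Hr0 Hr1].
    pose proof (Uw_lower w z) as HU. fold mu in HU.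
    assert (HU0 : 0 < Cmod (Uw w z)) by nra.
    pose proof (upper_real alpha mu (Cmod z) (Cmod (Uw w z)) 0 Ha (conj Hm0 Hm1) (conj Hr0 Hr1) HU) as UR.
    unfold Rpower.
    set (A := exp (alpha * ln (1 - Cmod z ^ 2))) in *.
    set (B := exp (- (alpha + INR 0) * ln (Cmod (Uw w z))) * / Cmod (Uw w z)) in *.
    assert (HA : 0 < A) by apply exp_pos.
    assert (HB : 0 < B) by (apply Rmult_lt_0_compat; [apply exp_pos|apply Rinv_0_lt_compat; lra]).
    apply Rle_trans with (alpha * (A * B)).
    { fold mu. replace (A * (alpha * mu * B)) with (alpha * (A * B) * mu) by ring.
      assert (0 <= alpha * (A * B)) by (apply Rmult_le_pos; [lra|]; apply Rmult_le_pos; lra). nra. }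
    unfold M0. replace ((1 - mu ^ 2) ^ (0 + 1)) with (1 - mu ^ 2) in UR by (simpl; ring).
    replace (2 ^ (0 + 1)) with 2 in UR |- * by (simpl; ring).
    unfold Rdiv in UR |- *.
    replace (alpha * (exp (alpha * ln 2) * 2) * / (1 - mu ^ 2)) with (alpha * (exp (alpha * ln 2) * 2 * / (1 - mu ^ 2))) by ring.
    apply Rmult_le_compat_l; lra.
Qed.

Theorem lemma2p4 (alpha : R) (Halpha : 0 < alpha) :
  (forall i : nat, (1 <= i)%nat ->
    exists C1 C2 : R, 0 < C1 /\ 0 < C2 /\
      forall w : C, inD w ->
        analytic_on_D (fw alpha i w) /\
        Rbar_le (Finite (C1 / (1 - Cmod w ^ 2) ^ (i + 1))) (Bnorm alpha (fw alpha i w)) /\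
        Rbar_le (Bnorm alpha (fw alpha i w)) (Finite (C2 / (1 - Cmod w ^ 2) ^ (i + 1))))
  /\
  (exists C1 C2 : R, 0 < C1 /\ 0 < C2 /\
      forall w : C, inD w -> 1 / 2 < Cmod w ->
        analytic_on_D (fw alpha 0 w) /\
        Rbar_le (Finite (C1 / (1 - Cmod w ^ 2))) (Bnorm alpha (fw alpha 0 w)) /\
        Rbar_le (Bnorm alpha (fw alpha 0 w)) (Finite (C2 / (1 - Cmod w ^ 2)))).
Proof.
  split.
  - intros i Hi. destruct i as [|k]. { exfalso. inversion Hi. }
    apply part_pos. exact Halpha.
  - apply part_zero. exact Halpha.
Qed.
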